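(* Let $\mathcal{N}:\mathbf{M}\to\mathbf{P}$ be a natural transformation. For each effect $M\in\mathfrak{E}(A)$ define $\xi(M)=\mathcal{N}_X(\mu)(E)$, where $(X,\Sigma_X)$ is any measurable space, $\mu$ is any POVM on $(X,\Sigma_X)$ and $E\in\Sigma_X$ is any event with $\mu(E)=M$. Then $\xi:\mathfrak{E}(A)\to[0,1]$ is well defined (the value does not depend on the choice of $(X,\Sigma_X),\mu,E$, and such a choice always exists), and $\xi$ is a generalized probability measure on $\mathfrak{E}(A)$.
   Context: Fix a quantum system $A$ with complex separable Hilbert space $\mathcal{H}_A$; $\mathbf{Obs}(A)$ is the space of bounded self-adjoint operators on $\mathcal{H}_A$ and $\mathds{1}$ the identity. $\mathfrak{Meas}$ is the category of measurable spaces and measurable functions; $\mathfrak{Set}$ the category of sets and functions. A POVM on $(X,\Sigma_X)$ is a map $\mu:\Sigma_X\to\mathbf{Obs}(A)$ with $\mu(E)\ge0$, $\mu(X)=\mathds{1}$, and $\mu(\bigsqcup_n E_n)=\sum_n\mu(E_n)$ (weak operator topology) for countable disjoint families. The measurement functor $\mathbf{M}:\mathfrak{Meas}\to\mathfrak{Set}$ sends $(X,\Sigma_X)$ to the set of POVMs on it and a measurable $f:X\to Y$ to $\mu\mapsto f_*\mu$, $(f_*\mu)(F)=\mu(f^{-1}(F))$. The probability functor $\mathbf{P}:\mathfrak{Meas}\to\mathfrak{Set}$ sends $(X,\Sigma_X)$ to the set of probability measures on it and $f$ to pushforward $\mu\mapsto f_*\mu$. A natural transformation $\mathcal{N}:\mathbf{M}\to\mathbf{P}$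 assigns to each measurable space $(X,\Sigma_X)$ a function $\mathcal{N}_X:\mathbf{M}(X,\Sigma_X)\to\mathbf{P}(X,\Sigma_X)$ such that $\mathcal{N}_Y\circ\mathbf{M}(f)=\mathbf{P}(f)\circ\mathcal{N}_X$ for every measurable $f:X\to Y$. The space of effects is $\mathfrak{E}(A)=\{M\in\mathbf{Obs}(A):0\le M\le\mathds{1}\}$. A generalized probability measure is a function $\xi:\mathfrak{E}(A)\to[0,1]$ with $\xi(\mathds{1})=1$ such that for every countable family $\{M_\lambda\}_{\lambda\in\Lambda}\subset\mathfrak{E}(A)$ with $\sum_{\lambda}M_\lambda\le\mathds{1}$ one has $\xi(\sum_\lambda M_\lambda)=\sum_\lambda\xi(M_\lambda)$. *)

(* Defs.v *)
From HB Require Import structures.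
From mathcomp Require Import all_boot all_order all_algebra.
From mathcomp Require Import all_classical all_reals all_analysis.
From mathcomp.real_closed Require Import complex.

Set Implicit Arguments.
Unset Strict Implicit.
Unset Printing Implicit Defensive.

Import Order.TTheory GRing.Theory Num.Theory.
Import numFieldNormedType.Exports.
Local Open Scope classical_set_scope.
Local Open Scope ring_scope.

(* The inner product is linear in the first argument, conjugate-linear *)
(* in the second.                                                       *)

Record hilbert (R : realType) := Hilbert {
  hvec :> lmodType R[i];
  inner : hvec -> hvec -> R[i];
  inner_conj : forall x y, inner y x = (inner x y)^*;
  inner_linear : forall (a : R[i]) x y z,
      inner (a *: x + y) z = a * inner x z + inner y z;
  inner_ge0 : forall x, 0 <= inner x x;
  inner_eq0 : forall x, inner x x = 0 -> x = 0;
  inner_complete : forall u : nat -> hvec,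
      (forall eps : R, 0 < eps -> exists N : nat, forall m n : nat,
          (N <= m)%N -> (N <= n)%N ->
          Num.sqrt (complex.Re (inner (u m - u n) (u m - u n))) < eps) ->
      exists l : hvec, forall eps : R, 0 < eps -> exists N : nat, forall n : nat,
          (N <= n)%N -> Num.sqrt (complex.Re (inner (u n - l) (u n - l))) < eps;
  inner_separable : exists e : nat -> hvec, forall (x : hvec) (eps : R), 0 < eps ->
      exists n : nat, Num.sqrt (complex.Re (inner (x - e n) (x - e n))) < eps
}.

Section Operators.
Variables (R : realType) (H : hilbert R).

Definition hnorm (x : H) : R := Num.sqrt (complex.Re (inner x x)).

Definition is_obs (T : H -> H) : Prop :=
  [/\ (forall (a : R[i]) (x y : H), T (a *: x + y) = a *: T x + T y),
      (exists C : R, forall x : H, hnorm (T x) <= C * hnorm x) &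
      (forall x y : H, inner (T x) y = inner x (T y))].

Definition op_ge0 (T : H -> H) : Prop := forall x : H, 0 <= inner (T x) x.

Definition op_le (S T : H -> H) : Prop := forall x : H, inner (S x) x <= inner (T x) x.

Definition is_effect (M : H -> H) : Prop :=
  [/\ is_obs M, op_ge0 M & op_le M id].

Definition cvgC (u : nat -> R[i]) (l : R[i]) : Prop :=
  ((fun n => complex.Re (u n)) @ \oo --> complex.Re l) /\
  ((fun n => complex.Im (u n)) @ \oo --> complex.Im l).

Definition wot_sum (M : nat -> H -> H) (S : H -> H) : Prop :=
  forall x y : H, cvgC (fun N => \sum_(n < N) inner (M n x) y) (inner (S x) y).

(* generalized probability measure on E(A); countable families are
   indexed by nat (finite families: pad with zero effects) *)
Definition is_gen_prob (xi : (H -> H) -> R) : Prop :=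
  [/\ (forall M, is_effect M -> 0 <= xi M <= 1),
      xi id = 1 &
      (forall (M : nat -> H -> H) (S : H -> H),
          (forall n, is_effect (M n)) -> wot_sum M S -> is_effect S ->
          (fun N => \sum_(n < N) xi (M n)) @ \oo --> xi S)].

End Operators.

Record povm (R : realType) (H : hilbert R) (d : measure_display)
    (X : measurableType d) := Povm {
  povm_fun :> set X -> (H -> H);
  povm_obs : forall E, measurable E -> is_obs (povm_fun E);
  povm_ge0 : forall E, measurable E -> op_ge0 (povm_fun E);
  povm_setT : povm_fun setT = id;
  povm_sigma : forall F : nat -> set X, (forall n, measurable (F n)) ->
      trivIset setT F -> wot_sum (fun n => povm_fun (F n)) (povm_fun (\bigcup_n F n))
}.

Definition is_natural (R : realType) (H : hilbert R)
    (N : forall (d : measure_display) (X : measurableType d),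
        povm H X -> probability X R) : Prop :=
  forall (d1 d2 : measure_display) (X : measurableType d1) (Y : measurableType d2)
    (f : X -> Y), measurable_fun setT f ->
  forall (mu : povm H X) (nu : povm H Y),
    povm_fun nu = (fun F => povm_fun mu (f @^-1` F)) ->
    (fun F => N d2 Y nu F) = (fun F => N d1 X mu (f @^-1` F)).

(* Main.v *)
Require Import Defs.
From HB Require Import structures.
From mathcomp Require Import all_boot all_order all_algebra.
From mathcomp Require Import all_classical all_reals all_analysis.
From mathcomp.real_closed Require Import complex.
From mathcomp Require Import ring lra.
Import Order.TTheory GRing.Theory Num.Theory.
Import numFieldNormedType.Exports.
Local Open Scope classical_set_scope.
Local Open Scope ring_scope.

Unset Strict Implicit.
Unset Printing Implicit Defensive.

Section Cplx.
Context {R : realType}.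
Local Notation Re := (@complex.Re R).
Local Notation Im := (@complex.Im R).
Lemma ReM (a b : R[i]) : Re (a * b) = Re a * Re b - Im a * Im b.
Proof. by case: a => ? ?; case: b => ? ?. Qed.
Lemma ImM (a b : R[i]) : Im (a * b) = Re a * Im b + Im a * Re b.
Proof. by case: a => ? ?; case: b => ? ?. Qed.
Lemma ReJ (a : R[i]) : Re (a^*) = Re a.
Proof. by case: a. Qed.
Lemma ImJ (a : R[i]) : Im (a^*) = - Im a.
Proof. by case: a. Qed.
Lemma ReD (a b : R[i]) : Re (a + b) = Re a + Re b.
Proof. by case: a => ? ?; case: b => ? ?. Qed.
Lemma ImD (a b : R[i]) : Im (a + b) = Im a + Im b.
Proof. by case: a => ? ?; case: b => ? ?. Qed.
Lemma ReN (a : R[i]) : Re (- a) = - Re a.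
Proof. by case: a. Qed.
Lemma ImN (a : R[i]) : Im (- a) = - Im a.
Proof. by case: a. Qed.
Lemma ReB (a b : R[i]) : Re (a - b) = Re a - Re b.
Proof. by rewrite ReD ReN. Qed.
Lemma ImB (a b : R[i]) : Im (a - b) = Im a - Im b.
Proof. by rewrite ImD ImN. Qed.
Lemma Re0 : Re 0 = 0. Proof. by []. Qed.
Lemma Im0 : Im 0 = 0. Proof. by []. Qed.
Lemma Re_sum (I : Type) (r : seq I) (P : pred I) (f : I -> R[i]) :
  Re (\sum_(i <- r | P i) f i) = \sum_(i <- r | P i) Re (f i).
Proof. exact: (big_morph _ ReD Re0). Qed.
Lemma Im_sum (I : Type) (r : seq I) (P : pred I) (f : I -> R[i]) :
  Im (\sum_(i <- r | P i) f i) = \sum_(i <- r | P i) Im (f i).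
Proof. exact: (big_morph _ ImD Im0). Qed.
Lemma c_ext (a b : R[i]) : Re a = Re b -> Im a = Im b -> a = b.
Proof. by case: a => ? ?; case: b => ? ? /= -> ->. Qed.
Lemma ge0E (a : R[i]) : (0 <= a) = (Im a == 0) && (0 <= Re a).
Proof. by rewrite lecE eq_sym. Qed.
Lemma ge0_Im {a : R[i]} : 0 <= a -> Im a = 0.
Proof. by rewrite ge0E => /andP[/eqP]. Qed.
Lemma ge0_Re {a : R[i]} : 0 <= a -> 0 <= Re a.
Proof. by rewrite ge0E => /andP[]. Qed.
End Cplx.

Section Hil.
Context {R : realType} {H : hilbert R}.
Local Notation Re := (@complex.Re R).
Local Notation Im := (@complex.Im R).
Local Notation ip := (@inner R H).
Implicit Types (x y z : H) (a : R[i]).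

Lemma inner0l y : ip 0 y = 0.
Proof.
have := inner_linear 1 (0 : H) 0 y; rewrite scaler0 addr0 mul1r.
by move/(congr1 (fun t => t - ip 0 y)); rewrite subrr addrK.
Qed.
Lemma innerDl x y z : ip (x + y) z = ip x z + ip y z.
Proof. by have := inner_linear 1 x y z; rewrite scale1r mul1r. Qed.
Lemma innerZl a x z : ip (a *: x) z = a * ip x z.
Proof. by have := inner_linear a x 0 z; rewrite addr0 inner0l addr0. Qed.
Lemma innerNl x z : ip (- x) z = - ip x z.
Proof. by rewrite -scaleN1r innerZl mulN1r. Qed.
Lemma innerBl x y z : ip (x - y) z = ip x z - ip y z.
Proof. by rewrite innerDl innerNl. Qed.
Lemma inner0r y : ip y 0 = 0.
Proof. by rewrite inner_conj inner0l conjC0. Qed.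
Lemma innerDr x y z : ip z (x + y) = ip z x + ip z y.
Proof. by rewrite (inner_conj (x + y) z) innerDl rmorphD (inner_conj x z) (inner_conj y z). Qed.
Lemma innerZr a x z : ip z (a *: x) = a^* * ip z x.
Proof. by rewrite (inner_conj (a *: x) z) innerZl rmorphM (inner_conj x z). Qed.
Lemma innerNr x z : ip z (- x) = - ip z x.
Proof. by rewrite (inner_conj (- x) z) innerNl rmorphN (inner_conj x z). Qed.
Lemma innerBr x y z : ip z (x - y) = ip z x - ip z y.
Proof. by rewrite innerDr innerNr. Qed.
Lemma inner_suml (I : Type) (r : seq I) (P : pred I) (f : I -> H) y :
  ip (\sum_(i <- r | P i) f i) y = \sum_(i <- r | P i) ip (f i) y.
Proof. exact: (big_morph (fun v => ip v y) (fun u v => innerDl u v y) (inner0l y)). Qed.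
Lemma inner_eq x x' : (forall y, ip x y = ip x' y) -> x = x'.
Proof.
move=> e; apply/eqP; rewrite -subr_eq0; apply/eqP; apply: inner_eq0.
by rewrite innerBl e subrr.
Qed.
Lemma op_ext (S T : H -> H) : (forall x y, ip (S x) y = ip (T x) y) -> S = T.
Proof. by move=> e; apply: funext => x; apply: inner_eq => y; exact: e. Qed.
Lemma Im_inner_self x : Im (ip x x) = 0.
Proof. exact: ge0_Im (inner_ge0 x). Qed.
Lemma Re_inner_self_ge0 x : 0 <= Re (ip x x).
Proof. exact: ge0_Re (inner_ge0 x). Qed.

Lemma CS (B : H -> H -> R[i])
  (Blin : forall a x y z, B (a *: x + y) z = a * B x z + B y z)
  (Bherm : forall x y, B y x = (B x y)^*)
  (Bpos : forall x, 0 <= B x x) x y :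
  Re (B x y) ^+ 2 + Im (B x y) ^+ 2 <= Re (B x x) * Re (B y y).
Proof.
have B0 : forall z, B 0 z = 0.
  move=> z; have := Blin 1 0 0 z; rewrite scaler0 addr0 mul1r.
  by move/(congr1 (fun t => t - B 0 z)); rewrite subrr addrK.
have BZ : forall a u z, B (a *: u) z = a * B u z.
  by move=> a u z; have := Blin a u 0 z; rewrite addr0 B0 addr0.
have BD : forall u v z, B (u + v) z = B u z + B v z.
  by move=> u v z; have := Blin 1 u v z; rewrite scale1r mul1r.
have BZr : forall a u z, B z (a *: u) = a^* * B z u.
  by move=> a u z; rewrite (Bherm (a *: u) z) BZ rmorphM (Bherm u z).
have BDr : forall u v z, B z (u + v) = B z u + B z v.
  by move=> u v z; rewrite (Bherm (u + v) z) BD rmorphD (Bherm u z) (Bherm v z).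
set b := B x y.
have Hb' : B y x = b^* by rewrite Bherm.
have IX : Im (B x x) = 0 by apply: ge0_Im.
have IY : Im (B y y) = 0 by apply: ge0_Im.
have RX : 0 <= Re (B x x) by apply: ge0_Re.
have RY : 0 <= Re (B y y) by apply: ge0_Re.
set X := Re (B x x); set Y := Re (B y y).
set beta := Re b ^+ 2 + Im b ^+ 2.
have key : forall t : R, 0 <= X - 2 * t * beta + t ^+ 2 * beta * Y.
  move=> t.
  set s : R[i] := (t%:C * b)%C.
  have := Bpos (x + (- s) *: y).
  rewrite BD BZ !BDr !BZr Hb' -/b.
  move/ge0_Re; rewrite /s /X /Y /beta /b; move: IX IY.
  case: (B x x) => p1 p2; case: (B y y) => q1 q2; case: (B x y) => b1 b2 /= I1 I2 h; subst p2 q2.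
  apply: le_trans h _; rewrite le_eqVlt; apply/orP; left; apply/eqP; ring.
have bge0 : 0 <= beta by rewrite /beta; nra.
have [Y0|Ypos] := eqVneq Y 0.
  rewrite Y0 mulr0.
  have [b0|bpos] := eqVneq beta 0; first by rewrite b0.
  have bp : 0 < beta by rewrite lt_def bpos bge0.
  have := key ((X + 1) / (2 * beta)); rewrite Y0 mulr0 addr0.
  have -> : 2 * ((X + 1) / (2 * beta)) * beta = X + 1.
    by field; rewrite bpos.
  lra.
have Yp : 0 < Y by rewrite lt_def Ypos RY.
have := key (Y^-1).
have -> : X - 2 * Y^-1 * beta + Y^-1 ^+ 2 * beta * Y = (X * Y - beta) / Y.
  by field.
rewrite pmulr_lge0 ?invr_gt0 //; lra.
Qed.


Definition lin (T : H -> H) := forall a x y, T (a *: x + y) = a *: T x + T y.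
Definition sa (T : H -> H) := forall x y, ip (T x) y = ip x (T y).
Definition sub1 (T : H -> H) := forall x, Re (ip (T x) x) <= Re (ip x x).


Lemma eff_sq (T : H -> H) : lin T -> sa T -> op_ge0 T -> sub1 T ->
  forall x, Re (ip (T x) (T x)) <= Re (ip (T x) x).
Proof.
move=> hl hs hp h1 x.
have B1 : forall a (u v z : H), ip (T (a *: u + v)) z = a * ip (T u) z + ip (T v) z.
  by move=> a u v z; rewrite hl innerDl innerZl.
have B2 : forall u v : H, ip (T v) u = (ip (T u) v)^*.
  by move=> u v; rewrite hs (inner_conj (T u) v).
have := @CS (fun u v => ip (T u) v) B1 B2 hp x (T x).
have /= := h1 (T x).
have := ge0_Re (hp x).
have := Re_inner_self_ge0 (T x).
set r := Re (ip (T x) (T x)); set p := Re (ip (T x) x); set q := Re (ip (T (T x)) (T x)).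
set i := complex.Im _.
move=> r0 p0 qr cs.
have rr : r * r <= p * r.
  have : p * q <= p * r by rewrite ler_wpM2l.
  have : r ^+ 2 <= r ^+ 2 + i ^+ 2 by rewrite lerDl sqr_ge0.
  move: cs; rewrite expr2; lra.
have [->|rn] := eqVneq r 0; first by [].
have rp : 0 < r by rewrite lt_def rn r0.
by rewrite -(ler_pM2r rp).
Qed.

Lemma eff_norm (T : H -> H) : lin T -> sa T -> op_ge0 T -> sub1 T ->
  forall x, hnorm (T x) <= 1 * hnorm x.
Proof.
move=> hl hs hp h1 x; rewrite mul1r /hnorm ler_sqrt ?Re_inner_self_ge0 //.
exact: le_trans (eff_sq _ hl hs hp h1 x) (h1 x).
Qed.

Lemma effectP {T : H -> H} : lin T -> sa T -> op_ge0 T -> sub1 T -> is_effect T.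
Proof.
move=> hl hs hp h1; split => //.
- split => //; exists 1; exact: eff_norm _ hl hs hp h1.
- move=> x; rewrite lecE /= Im_inner_self ge0_Im // eqxx /=; exact: h1.
Qed.

Lemma effect_lin {T : H -> H} : is_effect T -> lin T. Proof. by case=> [[]]. Qed.
Lemma effect_sa {T : H -> H} : is_effect T -> sa T. Proof. by case=> [[]]. Qed.
Lemma effect_pos {T : H -> H} : is_effect T -> op_ge0 T. Proof. by case. Qed.
Lemma effect_sub1 {T : H -> H} : is_effect T -> sub1 T.
Proof. by case=> _ _ h x; have := h x; rewrite lecE => /andP[]. Qed.

Lemma effect_obs {T : H -> H} : is_effect T -> is_obs T. Proof. by case. Qed.

Definition op0 : H -> H := fun _ => 0.
Definition opC (S : H -> H) : H -> H := fun x => x - S x.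

Lemma effect_id : is_effect (id : H -> H).
Proof.
apply: effectP => //; last by move=> x; apply: inner_ge0.
Qed.

Lemma effect0 : is_effect op0.
Proof.
apply: effectP.
- by move=> a x y; rewrite /op0 scaler0 addr0.
- by move=> x y; rewrite /op0 inner0l inner0r.
- by move=> x; rewrite /op0 inner0l.
- by move=> x; rewrite /op0 inner0l Re0 Re_inner_self_ge0.
Qed.

Lemma effectC (S : H -> H) : is_effect S -> is_effect (opC S).
Proof.
move=> hS; have hl := effect_lin hS; have hs := effect_sa hS.
have hp := effect_pos hS.
apply: effectP.
- by move=> a x y; rewrite /opC hl scalerBr opprD addrACA.
- by move=> x y; rewrite /opC innerBl innerBr hs.
- by move=> x; rewrite /opC innerBl subr_ge0; case: hS => _ _; apply.
- move=> x; rewrite /opC innerBl ReB; have := ge0_Re (hp x); lra.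
Qed.

End Hil.

Section Lim.
Context {R : realType}.
Local Notation Re := (@complex.Re R).
Local Notation Im := (@complex.Im R).
Implicit Types (u v : nat -> R[i]) (l m : R[i]).

Lemma cvgr_unique (f : nat -> R) (a b : R) : f @ \oo --> a -> f @ \oo --> b -> a = b.
Proof. by move=> h1 h2; rewrite -(cvg_lim (@Rhausdorff R) h1) (cvg_lim (@Rhausdorff R) h2). Qed.

Lemma cvgC_unique u l m : cvgC u l -> cvgC u m -> l = m.
Proof.
move=> [h1 h2] [h3 h4]; apply: c_ext; [exact: cvgr_unique h1 h3|exact: cvgr_unique h2 h4].
Qed.

Lemma cvgC_add u v l m : cvgC u l -> cvgC v m -> cvgC (fun n => u n + v n) (l + m).
Proof.
move=> [h1 h2] [h3 h4]; split.
- have -> : (fun n => Re (u n + v n)) = (fun n => Re (u n) + Re (v n)).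
    by apply: funext => n; rewrite ReD.
  by rewrite ReD; apply: cvgD.
- have -> : (fun n => Im (u n + v n)) = (fun n => Im (u n) + Im (v n)).
    by apply: funext => n; rewrite ImD.
  by rewrite ImD; apply: cvgD.
Qed.

Lemma cvgC_mull (c : R[i]) u l : cvgC u l -> cvgC (fun n => c * u n) (c * l).
Proof.
move=> [h1 h2]; split.
- have -> : (fun n => Re (c * u n)) = (fun n => Re c * Re (u n) - Im c * Im (u n)).
    by apply: funext => n; rewrite ReM.
  rewrite ReM; apply: cvgB; apply: cvgM => //; exact: cvg_cst.
- have -> : (fun n => Im (c * u n)) = (fun n => Re c * Im (u n) + Im c * Re (u n)).
    by apply: funext => n; rewrite ImM.
  rewrite ImM; apply: cvgD; apply: cvgM => //; exact: cvg_cst.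
Qed.

Lemma cvgC_conj u l : cvgC u l -> cvgC (fun n => (u n)^*) l^*.
Proof.
move=> [h1 h2]; split.
- have -> : (fun n => Re ((u n)^*)) = (fun n => Re (u n)).
    by apply: funext => n; rewrite ReJ.
  by rewrite ReJ.
- have -> : (fun n => Im ((u n)^*)) = (fun n => - Im (u n)).
    by apply: funext => n; rewrite ImJ.
  by rewrite ImJ; apply: cvgN.
Qed.

Lemma cvgC_ext u v l : (forall n, u n = v n) -> cvgC u l -> cvgC v l.
Proof. by move=> e; have -> : v = u by apply: funext => n; rewrite e. Qed.

Lemma cvgC_near u l : (exists N, forall n, (N <= n)%N -> u n = l) -> cvgC u l.
Proof.
move=> [N hN]; split; apply: cvg_near_cst; exists N => // n /= /hN -> //.
Qed.

Lemma cvgC_shift u l : cvgC (fun n => u n.+1) l -> cvgC u l.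
Proof.
move=> [h1 h2]; split; rewrite -cvg_shiftS; [exact: h1|exact: h2].
Qed.

Lemma cvgr_le (f : nat -> R) (a c : R) : f @ \oo --> a -> (forall n, f n <= c) -> a <= c.
Proof.
move=> h hc; rewrite -(cvg_lim (@Rhausdorff R) h); apply: limr_le.
  by apply/cvg_ex; exists a.
by apply: nearW.
Qed.

Lemma cvgr_ge (f : nat -> R) (a c : R) : f @ \oo --> a -> (forall n, c <= f n) -> c <= a.
Proof.
move=> h hc; rewrite -(cvg_lim (@Rhausdorff R) h); apply: limr_ge.
  by apply/cvg_ex; exists a.
by apply: nearW.
Qed.


Lemma cvg_small (z a : nat -> R) (g : R) : 0 <= g -> (forall n, 0 <= a n) ->
  (forall n, z n ^+ 2 <= a n * g) ->
  (forall eps, 0 < eps -> exists N, forall n, (N <= n)%N -> Num.sqrt (a n) < eps) ->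
  z @ \oo --> 0.
Proof.
move=> g0 a0 hz ha; apply/cvgrPdist_lt => eps ep.
set q := Num.sqrt g.
have q0 : 0 <= q := sqrtr_ge0 g.
have q1 : 0 < q + 1 by rewrite ltr_wpDl.
have dp : 0 < eps / (q + 1) by rewrite divr_gt0.
have [N hN] := ha _ dp.
exists N => // n /= /hN hs.
rewrite sub0r normrN.
have s0 : 0 <= Num.sqrt (a n) := sqrtr_ge0 _.
have hz' := hz n; rewrite -(sqr_sqrtr (a0 n)) -(sqr_sqrtr g0) -/q in hz'.
move: hs hz' s0; set s := Num.sqrt (a n); set d := eps / (q + 1) => hs hz' s0.
have e : eps = d * (q + 1) by rewrite /d divfK // gt_eqF.
have sq : s * q < eps by rewrite e; nra.
have nz : `|z n| ^+ 2 = z n ^+ 2 by rewrite real_normK // num_real.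
have nz0 : 0 <= `|z n| := normr_ge0 _.
have sq0 : 0 <= s * q by rewrite mulr_ge0.
have h2 : (s * q) ^+ 2 < eps ^+ 2 by nra.
have h3 : `|z n| ^+ 2 < eps ^+ 2.
  by rewrite nz; apply: le_lt_trans h2; rewrite exprMn.
rewrite ltNge; apply/negP => h4.
have : eps * eps <= `|z n| * `|z n| by apply: ler_pM => //; apply: ltW.
move: h3; rewrite !expr2; lra.
Qed.

Lemma sum_split (V : zmodType) (f : nat -> V) (P : pred nat) (k m : nat) : (k <= m)%N ->
  \sum_(0 <= n < m | P n) f n =
  \sum_(0 <= n < k | P n) f n + \sum_(0 <= n < m | (k <= n)%N && P n) f n.
Proof.
move=> km.
have -> : \sum_(0 <= n < m | (k <= n)%N && P n) f n = \sum_(k <= n < m | P n) f n.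
  rewrite (big_cat_nat (leq0n k) km) /= [X in X + _]big_nat_cond big1 ?add0r.
    rewrite big_nat_cond [RHS]big_nat_cond; apply: eq_bigl => i.
    by case: (boolP (k <= i)%N) => //=; rewrite andbT.
  move=> i /andP[/andP[_ ik] /andP[ki _]]; by rewrite leqNgt ik in ki.
by rewrite (big_cat_nat (leq0n k) km).
Qed.

End Lim.

Section Sub.
Context {R : realType} {H : hilbert R}.
Local Notation Re := (@complex.Re R).
Local Notation Im := (@complex.Im R).
Local Notation ip := (@inner R H).
Variable M : nat -> H -> H.
Hypothesis hM : forall n, is_effect (M n).
Hypothesis hsum : wot_sum M id.

Definition GS (P : pred nat) (N : nat) (x : H) : H := \sum_(0 <= n < N | P n) M n x.
Definition bd (v : H) n := Re (ip (M n v) v).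

Lemma bd_ge0 v n : 0 <= bd v n.
Proof. exact: ge0_Re (effect_pos (hM n) v). Qed.

Lemma ip_GS P N x y : ip (GS P N x) y = \sum_(0 <= n < N | P n) ip (M n x) y.
Proof. by rewrite /GS inner_suml. Qed.

Lemma GS_lin P N : lin (GS P N).
Proof.
move=> a x y; rewrite /GS scaler_sumr -big_split /=; apply: eq_bigr => n _.
by rewrite (effect_lin (hM n)).
Qed.

Lemma GS_sa P N : sa (GS P N).
Proof.
move=> x y; rewrite ip_GS (inner_conj (GS P N y) x) ip_GS rmorph_sum /=.
apply: eq_bigr => n _; by rewrite (effect_sa (hM n)) (inner_conj (M n y) x).
Qed.

Lemma GS_pos P N : op_ge0 (GS P N).
Proof. move=> x; rewrite ip_GS; apply: sumr_ge0 => n _; exact: effect_pos. Qed.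

Lemma s_cvg v : (fun N => \sum_(0 <= n < N) bd v n) @ \oo --> Re (ip v v).
Proof.
have [h _] := hsum v v.
have -> : (fun N => \sum_(0 <= n < N) bd v n) =
          (fun N => Re (\sum_(n < N) ip (M n v) v)).
  by apply: funext => N; rewrite Re_sum big_mkord.
exact: h.
Qed.

Lemma s_le v N : \sum_(0 <= n < N) bd v n <= Re (ip v v).
Proof.
have hc : cvgn (fun N => \sum_(0 <= n < N) bd v n).
  by apply/cvg_ex; exists (Re (ip v v)); exact: s_cvg.
rewrite -(cvg_lim (@Rhausdorff R) (s_cvg v)).
apply: (nondecreasing_cvgn_le _ hc) => n m nm.
rewrite (sum_split _ (bd v) xpredT _ _ nm) /= lerDl.
by apply: sumr_ge0 => i _; exact: bd_ge0.
Qed.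

Lemma GS_bd P N v : Re (ip (GS P N v) v) = \sum_(0 <= n < N | P n) bd v n.
Proof. by rewrite ip_GS Re_sum. Qed.

Lemma GS_sub1 P N : sub1 (GS P N).
Proof.
move=> v; rewrite GS_bd; apply: le_trans (s_le v N).
rewrite big_mkcond /=; apply: ler_sum => n _; case: (P n) => //; exact: bd_ge0.
Qed.

Lemma GS_eff P N : is_effect (GS P N).
Proof. exact: effectP (GS_lin P N) (GS_sa P N) (GS_pos P N) (GS_sub1 P N). Qed.

Lemma GS_cauchy (P : pred nat) x : forall eps : R, 0 < eps -> exists N : nat,
  forall m n : nat, (N <= m)%N -> (N <= n)%N ->
  Num.sqrt (Re (ip (GS P m x - GS P n x) (GS P m x - GS P n x))) < eps.
Proof.
move=> eps ep.
have e2 : 0 < eps ^+ 2 / 2 by rewrite divr_gt0 // exprn_gt0.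
have := s_cvg x; move/cvgrPdist_lt => /(_ _ e2) [N _ hN].
exists N => m n hm hn.
wlog nm : m n hm hn / (n <= m)%N.
  move=> W; case: (leqP n m) => [|/ltnW] h; first exact: W.
  by rewrite -opprB innerNl innerNr opprK; exact: W.
have -> : GS P m x - GS P n x = GS (fun i => (n <= i)%N && P i) m x.
  by rewrite /GS (sum_split _ _ _ _ _ nm) addrAC subrr add0r.
have se : Num.sqrt (eps ^+ 2) = eps by rewrite sqrtr_sqr ger0_norm // ltW.
rewrite -[X in _ < X]se ltr_sqrt ?exprn_gt0 //.
apply: le_lt_trans (eff_sq _ (GS_lin _ _) (GS_sa _ _) (GS_pos _ _) (GS_sub1 _ _) x) _.
rewrite GS_bd.
have h1 : \sum_(0 <= i < m | (n <= i)%N && P i) bd x i <=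
          \sum_(0 <= i < m | (n <= i)%N) bd x i.
  rewrite [leLHS]big_mkcond [leRHS]big_mkcond /=; apply: ler_sum => i _.
  by case: (n <= i)%N; case: (P i) => //=; exact: bd_ge0.
have h2 := sum_split _ (bd x) xpredT _ _ nm.
have h3 : \sum_(0 <= i < m | (n <= i)%N && xpredT i) bd x i =
          \sum_(0 <= i < m | (n <= i)%N) bd x i.
  by apply: eq_bigl => i /=; rewrite andbT.
rewrite h3 /= in h2.
have := hN m hm; have := hN n hn.
set L := Re (ip x x).
set sm := \sum_(0 <= i < m) bd x i in h2 *.
set sn := \sum_(0 <= i < n) bd x i in h2 *.
move=> /= a1 a2.
have b1 : L - sn <= `|L - sn| := ler_norm _.
have b2 : sm - L <= `|L - sm| by rewrite distrC; exact: ler_norm.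
move: h1; rewrite -/sm; lra.
Qed.

Definition Tlim (P : pred nat) (x : H) : H :=
  xget 0 [set l : H | forall eps : R, 0 < eps -> exists N : nat, forall n : nat,
    (N <= n)%N -> Num.sqrt (Re (ip (GS P n x - l) (GS P n x - l))) < eps].

Lemma Tlim_spec P x : forall eps : R, 0 < eps -> exists N : nat, forall n : nat,
    (N <= n)%N -> Num.sqrt (Re (ip (GS P n x - Tlim P x) (GS P n x - Tlim P x))) < eps.
Proof.
have := @inner_complete R H (fun n => GS P n x) (GS_cauchy P x).
move/(xgetPex 0); exact.
Qed.


Lemma Tlim_cvg P x y : cvgC (fun N => ip (GS P N x) y) (ip (Tlim P x) y).
Proof.
have hs := Tlim_spec P x.
have CSi := fun w => @CS R H ip (@inner_linear R H) (@inner_conj R H) (@inner_ge0 R H) w y.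
split; apply/subr_cvg0.
- apply: (cvg_small _ (fun n => Re (ip (GS P n x - Tlim P x) (GS P n x - Tlim P x)))
     (Re (ip y y))); last exact: hs.
  + exact: Re_inner_self_ge0.
  + by move=> n; exact: Re_inner_self_ge0.
  + move=> n; rewrite -ReB -innerBl; apply: le_trans (CSi _); rewrite lerDl sqr_ge0 //.
- apply: (cvg_small _ (fun n => Re (ip (GS P n x - Tlim P x) (GS P n x - Tlim P x)))
     (Re (ip y y))); last exact: hs.
  + exact: Re_inner_self_ge0.
  + by move=> n; exact: Re_inner_self_ge0.
  + move=> n; rewrite -ImB -innerBl; apply: le_trans (CSi _); rewrite lerDr sqr_ge0 //.
Qed.

Lemma Tlim_char P (S : H -> H) :
  (forall x y, cvgC (fun N => \sum_(0 <= n < N | P n) ip (M n x) y) (ip (S x) y)) ->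
  Tlim P = S.
Proof.
move=> h; apply: op_ext => x y; apply: (cvgC_unique _ _ _ (Tlim_cvg P x y)).
by apply: cvgC_ext (h x y) => N; rewrite ip_GS.
Qed.

Lemma Tlim_lin P : lin (Tlim P).
Proof.
move=> a x y; apply: inner_eq => z.
apply: (cvgC_unique _ _ _ (Tlim_cvg P (a *: x + y) z)).
rewrite innerDl innerZl.
apply: cvgC_ext (cvgC_add _ _ _ _ (cvgC_mull a _ _ (Tlim_cvg P x z)) (Tlim_cvg P y z)) => N.
by rewrite GS_lin innerDl innerZl.
Qed.

Lemma Tlim_sa P : sa (Tlim P).
Proof.
move=> x y; apply: (cvgC_unique _ _ _ (Tlim_cvg P x y)).
rewrite (inner_conj (Tlim P y) x).
apply: cvgC_ext (cvgC_conj _ _ (Tlim_cvg P y x)) => N.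
by rewrite (GS_sa P N x y) (inner_conj (GS P N y) x).
Qed.

Lemma Tlim_pos P : op_ge0 (Tlim P).
Proof.
move=> x; rewrite ge0E; have [h1 h2] := Tlim_cvg P x x; apply/andP; split.
- have h0 : (fun N => Im (ip (GS P N x) x)) = (fun _ => 0).
    by apply: funext => N; exact: ge0_Im (GS_pos _ _ _).
  rewrite h0 in h2; apply/eqP; exact: (cvgr_unique _ _ _ h2 (cvg_cst 0)).
- by apply: (cvgr_ge _ _ _ h1) => N; exact: ge0_Re (GS_pos _ _ _).
Qed.

Lemma Tlim_sub1 P : sub1 (Tlim P).
Proof.
move=> x; have [h _] := Tlim_cvg P x x.
by apply: (cvgr_le _ _ _ h) => N; exact: GS_sub1.
Qed.

Lemma Tlim_eff P : is_effect (Tlim P).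
Proof. exact: effectP (Tlim_lin P) (Tlim_sa P) (Tlim_pos P) (Tlim_sub1 P). Qed.

Lemma Tlim_diag P v :
  (fun N => \sum_(0 <= n < N | P n) bd v n) @ \oo --> Re (ip (Tlim P v) v).
Proof.
have [h _] := Tlim_cvg P v v.
have <- : (fun N => Re (ip (GS P N v) v)) = (fun N => \sum_(0 <= n < N | P n) bd v n).
  by apply: funext => N; exact: GS_bd.
exact: h.
Qed.

End Sub.

Section Pol.
Context {R : realType} {H : hilbert R}.
Local Notation Re := (@complex.Re R).
Local Notation Im := (@complex.Im R).
Local Notation ip := (@inner R H).

Lemma polar_exp (A : H -> H) : lin A -> sa A -> forall (x y : H) (c : R[i]),
  Re (ip (A (x + c *: y)) (x + c *: y)) =
  Re (ip (A x) x) + 2 * (Re c * Re (ip (A x) y) + Im c * Im (ip (A x) y))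
  + (Re c ^+ 2 + Im c ^+ 2) * Re (ip (A y) y).
Proof.
move=> hl hs x y c.
have lD : forall u v, A (u + v) = A u + A v.
  by move=> u v; have := hl 1 u v; rewrite !scale1r.
have l0 : A 0 = 0.
  have := lD 0 0; rewrite addr0 => /(congr1 (fun t => t - A 0)).
  by rewrite subrr addrK.
have lZ : forall a u, A (a *: u) = a *: A u.
  by move=> a u; have := hl a u 0; rewrite !addr0 l0 addr0.
rewrite lD lZ !innerDl !innerZl !innerDr !innerZr.
have e : ip (A y) x = (ip (A x) y)^* by rewrite hs (inner_conj (A x) y).
rewrite e.
move: (ip (A x) x) (ip (A x) y) (ip (A y) y) => P w Q.
case: P => ? ?; case: w => ? ?; case: Q => ? ?; case: c => ? ? /=.
ring.
Qed.

Lemma polarRe (A : H -> H) : lin A -> sa A -> forall x y,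
  Re (ip (A x) y) = (Re (ip (A (x + y)) (x + y)) - Re (ip (A (x - y)) (x - y))) / 4.
Proof.
move=> hl hs x y.
have h1 := polar_exp A hl hs x y 1; rewrite scale1r in h1.
have h2 := polar_exp A hl hs x y (-1); rewrite scaleN1r in h2.
rewrite h1 h2 ReN ImN /=.
lra.
Qed.

Lemma polarIm (A : H -> H) : lin A -> sa A -> forall x y,
  Im (ip (A x) y) = (Re (ip (A (x + 'i%C *: y)) (x + 'i%C *: y))
                    - Re (ip (A (x - 'i%C *: y)) (x - 'i%C *: y))) / 4.
Proof.
move=> hl hs x y.
have h1 := polar_exp A hl hs x y 'i%C.
have h2 := polar_exp A hl hs x y (- 'i%C); rewrite scaleNr in h2.
rewrite h1 h2 ReN ImN /=.
lra.
Qed.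

End Pol.

Section Sub2.
Context {R : realType} {H : hilbert R}.
Local Notation Re := (@complex.Re R).
Local Notation Im := (@complex.Im R).
Local Notation ip := (@inner R H).
Variable M : nat -> H -> H.
Hypothesis hM : forall n, is_effect (M n).
Hypothesis hsum : wot_sum M id.

Lemma key1 (G : set nat) v :
  (Re (ip (Tlim M (fun n => n \in G) v) v))%:E = (\esum_(n in G) (bd M v n)%:E)%E.
Proof.
have h := Tlim_diag M hM hsum (fun n => n \in G) v.
have h' : (fun N => (\sum_(0 <= n < N | n \in G) (bd M v n)%:E)%E) @ \oo -->
          (Re (ip (Tlim M (fun n => n \in G) v) v))%:E.
  have -> : (fun N => (\sum_(0 <= n < N | n \in G) (bd M v n)%:E)%E) =
            (fun N => (\sum_(0 <= n < N | n \in G) bd M v n)%:E).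
    by apply: funext => N; rewrite sumEFin.
  by apply: cvg_EFin; [apply: nearW | exact: h].
rewrite -(cvg_lim (@ereal_hausdorff R) h') nneseries_esum; last first.
  by move=> n _; rewrite lee_fin; exact: bd_ge0.
congr (esum _ _); apply: funext => n; apply: propext; rewrite /= in_setE; split => //.
Qed.


Lemma Tlim_union (F : nat -> set nat) : trivIset setT F -> forall v : H,
  (fun J => \sum_(0 <= j < J) Re (ip (Tlim M (fun n => n \in F j) v) v)) @ \oo -->
  Re (ip (Tlim M (fun n => n \in \bigcup_j F j) v) v).
Proof.
move=> tF v.
set q := fun j => Re (ip (Tlim M (fun n => n \in F j) v) v).
have q0 : forall j, 0 <= q j by move=> j; exact: ge0_Re (Tlim_pos M hM hsum _ _).
have hc := @is_cvg_nneseries R (fun j => (q j)%:E) xpredT 0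
   (fun n _ _ => (q0 n : (0 <= (q n)%:E)%E)).
have L : (\sum_(0 <= i <oo | xpredT i) (q i)%:E)%E =
         (Re (ip (Tlim M (fun n => n \in \bigcup_j F j) v) v))%:E.
  rewrite (eq_eseriesr (g := fun j => (\esum_(n in F j) (bd M v n)%:E)%E)); last first.
    by move=> j _; exact: key1.
  rewrite nneseries_esumT; last by move=> n; apply: esum_ge0 => k _; rewrite lee_fin; exact: bd_ge0.
  rewrite -esum_bigcupT //; last by move=> n; rewrite lee_fin; exact: bd_ge0.
  by rewrite key1.
rewrite L in hc.
have E : (fun n => (\sum_(0 <= i < n | xpredT i) (q i)%:E)%E) =
          (fun n => (\sum_(0 <= i < n) q i)%:E).
  by apply: funext => n; rewrite sumEFin.
rewrite E in hc.
exact: (fine_cvg hc).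
Qed.

Lemma Tlim_sigma (F : nat -> set nat) : trivIset setT F ->
  wot_sum (fun j => Tlim M (fun n => n \in F j)) (Tlim M (fun n => n \in \bigcup_j F j)).
Proof.
move=> tF x y.
have lj := fun P => Tlim_lin M hM hsum P.
have sj := fun P => Tlim_sa M hM hsum P.
split.
- have -> : (fun N => Re (\sum_(j < N) ip (Tlim M (fun n => n \in F j) x) y)) =
    (fun N => (\sum_(0 <= j < N) Re (ip (Tlim M (fun n => n \in F j) (x + y)) (x + y))
             - \sum_(0 <= j < N) Re (ip (Tlim M (fun n => n \in F j) (x - y)) (x - y))) / 4).
    apply: funext => N; rewrite Re_sum !big_mkord -sumrB mulr_suml.
    by apply: eq_bigr => j _; exact: polarRe.
  rewrite (polarRe _ (lj _) (sj _)).
  apply: cvgMr_tmp; apply: cvgB; exact: Tlim_union.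
- have -> : (fun N => Im (\sum_(j < N) ip (Tlim M (fun n => n \in F j) x) y)) =
    (fun N => (\sum_(0 <= j < N) Re (ip (Tlim M (fun n => n \in F j) (x + 'i%C *: y)) (x + 'i%C *: y))
             - \sum_(0 <= j < N) Re (ip (Tlim M (fun n => n \in F j) (x - 'i%C *: y)) (x - 'i%C *: y))) / 4).
    apply: funext => N; rewrite Im_sum !big_mkord -sumrB mulr_suml.
    by apply: eq_bigr => j _; exact: polarIm.
  rewrite (polarIm _ (lj _) (sj _)).
  apply: cvgMr_tmp; apply: cvgB; exact: Tlim_union.
Qed.

Definition mkpovm : povm H nat.
Proof.
refine (@Povm R H _ nat (fun F => Tlim M (fun n => n \in F)) _ _ _ _).
- by move=> E _; exact: effect_obs (Tlim_eff M hM hsum _).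
- by move=> E _; exact: Tlim_pos.
- apply: (Tlim_char M hM hsum) => x y.
  apply: cvgC_ext (hsum x y) => N; rewrite big_mkord; apply: eq_bigl => n.
  by rewrite in_setT.
- by move=> F _ tF; exact: Tlim_sigma.
Defined.

Lemma mkpovmE (F : set nat) : povm_fun mkpovm F = Tlim M (fun n => n \in F).
Proof. by []. Qed.

End Sub2.

Section Final.
Context {R : realType} {H : hilbert R}.
Local Notation Re := (@complex.Re R).
Local Notation Im := (@complex.Im R).
Local Notation ip := (@inner R H).

Lemma natmul_cvg (r l : R) : (fun N => r *+ N) @ \oo --> l -> r = 0.
Proof.
move=> h.
have h1 : (fun N => r *+ N.+1) @ \oo --> l by rewrite cvg_shiftS.
have h2 : (fun N => r + r *+ N) @ \oo --> r + l by apply: cvgD => //; exact: cvg_cst.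
have e : (fun N => r + r *+ N) = (fun N => r *+ N.+1) by apply: funext => N; rewrite mulrS.
rewrite e in h2.
have := cvgr_unique _ _ _ h1 h2; lra.
Qed.

Lemma sum_const_cvg0 (c : R[i]) l : cvgC (fun N => \sum_(n < N) c) l -> c = 0.
Proof.
move=> [h1 h2]; apply: c_ext.
- apply: (natmul_cvg _ (Re l)).
  have <- : (fun N => Re (\sum_(n < N) c)) = (fun N => Re c *+ N).
    by apply: funext => N; rewrite Re_sum sumr_const card_ord.
  exact: h1.
- apply: (natmul_cvg _ (Im l)).
  have <- : (fun N => Im (\sum_(n < N) c)) = (fun N => Im c *+ N).
    by apply: funext => N; rewrite Im_sum sumr_const card_ord.
  exact: h2.
Qed.

Lemma povm0 d (X : measurableType d) (mu : povm H X) : povm_fun mu set0 = op0.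
Proof.
have h := @povm_sigma _ _ _ _ mu (fun _ => set0) (fun _ => measurable0) (@trivIset_set0 _ _ setT).
rewrite bigcup0 // in h.
apply: op_ext => x y; rewrite /op0 inner0l.
exact: (sum_const_cvg0 _ _ (h x y)).
Qed.

Lemma povmC d (X : measurableType d) (mu : povm H X) (E : set X) : measurable E ->
  forall x y, ip (povm_fun mu (~` E) x) y = ip x y - ip (povm_fun mu E x) y.
Proof.
move=> mE.
pose G := fun n : nat => if n is 0%N then E else if n is 1%N then ~` E else set0.
have mG : forall n, measurable (G n).
  by case=> [|[|n]] /=; [exact: mE|exact: measurableC|exact: measurable0].
have tG : trivIset setT G.
  move=> i j _ _ [z [hi hj]]; move: hi hj.
  case: i => [|[|i]]; case: j => [|[|j]] /= hi hj //;
    first [by case: hi | by case: hj | by exfalso; exact: hj hi | by exfalso; exact: hi hj].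
have uG : \bigcup_n G n = setT.
  apply/seteqP; split => z // _.
  by case: (pselect (E z)) => hz; [exists 0%N | exists 1%N].
have h := povm_sigma mu mG tG; rewrite uG povm_setT in h.
move=> x y.
have hc : cvgC (fun n => \sum_(i < n) ip (povm_fun mu (G i) x) y)
               (ip (povm_fun mu E x) y + ip (povm_fun mu (~` E) x) y).
  apply: cvgC_near; exists 2%N => n; case: n => [|[|n]] // _.
  rewrite !big_ord_recl /= big1 ?addr0 ?addrA //.
  by move=> i _; rewrite povm0 /op0 inner0l.
have := cvgC_unique _ _ _ (h x y) hc => /= ->.
by rewrite addrAC subrr add0r.
Qed.

Lemma povm_eff d (X : measurableType d) (mu : povm H X) (E : set X) : measurable E ->
  is_effect (povm_fun mu E).
Proof.
move=> mE; split; [exact: povm_obs|exact: povm_ge0|].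
move=> x; rewrite lecE /= Im_inner_self (ge0_Im (povm_ge0 mu mE x)) eqxx /=.
have := ge0_Re (povm_ge0 mu (measurableC mE) x); rewrite povmC // ReB; lra.
Qed.

Definition M2 (A : H -> H) (n : nat) : H -> H :=
  if n is 0%N then A else if n is 1%N then opC A else op0.

Lemma M2_eff A : is_effect A -> forall n, is_effect (M2 A n).
Proof. by move=> hA; case=> [|[|n]] /=; [exact: hA|exact: effectC|exact: effect0]. Qed.

Lemma sum_M2 A x y n (P : pred nat) :
  \sum_(i < n.+2 | P i) ip (M2 A i x) y =
  (if P 0%N then ip (A x) y else 0) + (if P 1%N then ip (opC A x) y else 0).
Proof.
rewrite big_mkcond !big_ord_recl /= big1 ?addr0 // => i _.
by rewrite /op0 inner0l; case: (P _).
Qed.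

Lemma M2_sum A : wot_sum (M2 A) id.
Proof.
move=> x y; apply: cvgC_near; exists 2%N => n; case: n => [|[|n]] // _.
have := sum_M2 A x y n xpredT => /= ->.
by rewrite /opC innerBl addrC subrK.
Qed.

Definition P2 (A : H -> H) (hA : is_effect A) : povm H nat :=
  mkpovm (M2 A) (M2_eff A hA) (M2_sum A).

Lemma ip_if (c : bool) (u y : H) : ip (if c then u else 0) y = if c then ip u y else 0.
Proof. by case: c; rewrite ?inner0l. Qed.

Lemma P2E A hA (F : set nat) : povm_fun (P2 A hA) F =
  (fun x => (if 0%N \in F then A x else 0) + (if 1%N \in F then x - A x else 0)).
Proof.
rewrite /P2 mkpovmE; apply: (Tlim_char (M2 A) (M2_eff A hA) (M2_sum A)) => x y.
apply: cvgC_near; exists 2%N => n; case: n => [|[|n]] // _.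
rewrite big_mkord sum_M2 innerDl /opC.
by rewrite !ip_if.
Qed.

Lemma in_set1n (a b : nat) : (a \in [set b]) = (a == b).
Proof. by apply/idP/eqP; rewrite in_setE. Qed.

Lemma in_setb (P : pred nat) a : (a \in [set n | P n]) = P a.
Proof. by apply/idP/idP; rewrite in_setE. Qed.

End Final.

Lemma sum_pred1 (V : zmodType) (f : nat -> V) (k N : nat) : (k < N)%N ->
  \sum_(0 <= n < N | n == k) f n = f k.
Proof.
move=> kN; rewrite -big_filter.
have -> : [seq i <- index_iota 0 N | i == k] = [:: k].
  apply: filter_pred1_uniq; first by rewrite /index_iota iota_uniq.
  by rewrite mem_index_iota.
by rewrite big_seq1.
Qed.

Section Nat.
Context {R : realType} {H : hilbert R}.
Local Notation Re := (@complex.Re R).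
Local Notation Im := (@complex.Im R).
Local Notation ip := (@inner R H).
Variable N : forall (d : measure_display) (X : measurableType d),
  povm H X -> probability X R.
Hypothesis HN : is_natural N.

Lemma nat_xi d (X : measurableType d) (mu : povm H X) (E : set X) (mE : measurable E)
  (h : is_effect (povm_fun mu E)) : N d X mu E = N _ nat (P2 _ h) [set 0%N].
Proof.
pose f : X -> nat := fun z => if z \in E then 0%N else 1%N.
have pre : forall F : set nat, f @^-1` F =
    if 0%N \in F then (if 1%N \in F then setT else E)
    else (if 1%N \in F then ~` E else set0).
  move=> F; apply/seteqP; split => z; rewrite /f /preimage /=;
  case: (boolP (z \in E)) => hz; case: (boolP (0%N \in F)) => h0;
  case: (boolP (1%N \in F)) => h1 //=; move: hz h0 h1;
  rewrite ?in_setE ?notin_setE //=.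
have mf : measurable_fun setT f.
  move=> _ Y _; rewrite setTI pre.
  case: (0%N \in Y); case: (1%N \in Y) => //.
  exact: measurableC.
have hnu : povm_fun (P2 _ h) = (fun F => povm_fun mu (f @^-1` F)).
  apply: funext => F; rewrite P2E pre; apply: op_ext => x y.
  case: (0%N \in F); case: (1%N \in F) => /=.
  - by rewrite povm_setT /= addrC subrK.
  - by rewrite addr0.
  - by rewrite add0r innerBl povmC.
  - by rewrite povm0 /op0 addr0.
have := HN _ _ X nat f mf mu (P2 _ h) hnu.
move/(congr1 (fun g => g [set 0%N])) => /= ->.
by rewrite pre in_set1n eqxx in_set1n.
Qed.

Definition xiN (A : H -> H) : R :=
  match pselect (is_effect A) with
  | left h => fine (N _ nat (P2 A h) [set 0%N])
  | right _ => 0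
  end.

Lemma xi_spec d (X : measurableType d) (mu : povm H X) (E : set X) : measurable E ->
  ((xiN (povm_fun mu E))%:E = N d X mu E)%E.
Proof.
move=> mE; rewrite /xiN; case: pselect => [h|nh]; last first.
  by exfalso; apply: nh; exact: povm_eff.
rewrite (nat_xi d X mu E mE h) fineK //; exact: fin_num_measure.
Qed.

End Nat.

Theorem mainTheorem2 (R : realType) (H : hilbert R)
  (N : forall (d : measure_display) (X : measurableType d),
      povm H X -> probability X R)
  (HN : is_natural N) :
  (* every effect arises as mu(E) for some POVM mu and event E *)
  (forall M : H -> H, is_effect M ->
     exists (d : measure_display) (X : measurableType d) (mu : povm H X) (E : set X),
       measurable E /\ povm_fun mu E = M) /\
  (* xi(M) := N_X(mu)(E) does not depend on the choice, and xi is a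
     generalized probability measure *)
  (exists xi : (H -> H) -> R,
     (forall (d : measure_display) (X : measurableType d) (mu : povm H X) (E : set X),
        measurable E -> ((xi (povm_fun mu E))%:E = N d X mu E)%E) /\
     is_gen_prob xi).
Proof.
split.
  move=> A hA; exists _, nat, (P2 A hA), [set 0%N]; split => //.
  rewrite P2E; apply: funext => x; rewrite !in_set1n eqxx /=.
  by rewrite addr0.
exists (xiN N); split.
  by move=> d X mu E mE; exact: xi_spec.
split.
- move=> A hA; rewrite /xiN; case: pselect => [h|//].
  have hf : N _ nat (P2 A h) [set 0%N] \is a fin_num by apply: fin_num_measure.
  have h0 := measure_ge0 (N _ nat (P2 A h)) [set 0%N].
  have m0 : measurable [set 0%N] by [].
  have h1 := probability_le1 (N _ nat (P2 A h)) m0.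
  apply/andP; split; first exact: fine_ge0.
  have f1 : (1%E : \bar R) \is a fin_num by [].
  exact: (fine_le hf f1 h1).
- have := xi_spec N HN _ nat (P2 id effect_id) setT measurableT.
  rewrite povm_setT probability_setT.
  by move/(congr1 fine).
- move=> Ms S hMs hsumS hS.
  pose M3 := fun n : nat => if n is k.+1 then Ms k else opC S.
  have hM3 : forall n, is_effect (M3 n).
    by case=> [|k] /=; [exact: effectC | exact: hMs].
  have hsum3 : wot_sum M3 id.
    move=> x y; apply: cvgC_shift.
    have c0 : cvgC (fun _ : nat => inner (opC S x) y) (inner (opC S x) y).
      by apply: cvgC_near; exists 0%N.
    have hc := cvgC_add _ _ _ _ c0 (hsumS x y).
    have e : inner (opC S x) y + inner (S x) y = inner x y.
      by rewrite /opC innerBl subrK.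
    rewrite e in hc.
    apply: (cvgC_ext _ _ _ _ hc) => n.
    by rewrite big_ord_recl.
  pose Q := mkpovm M3 hM3 hsum3.
  have QS : forall k, povm_fun Q [set k.+1] = Ms k.
    move=> k; rewrite /Q mkpovmE; apply: (Tlim_char M3 hM3 hsum3) => x y.
    apply: cvgC_near; exists k.+2 => n hn.
    rewrite (eq_bigl (fun i => i == k.+1)); last by move=> i; rewrite in_set1n.
    by rewrite sum_pred1.
  have QT : povm_fun Q [set n | (0 < n)%N] = S.
    rewrite /Q mkpovmE; apply: (Tlim_char M3 hM3 hsum3) => x y.
    apply: cvgC_shift; apply: (cvgC_ext _ _ _ _ (hsumS x y)) => n.
    rewrite [RHS]big_mkcond big_nat_recl //= in_setb /= add0r big_mkord.
    by apply: eq_bigr => i _; rewrite in_setb.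
  have tF : trivIset setT (fun i : nat => [set i.+1]).
    by move=> i j _ _ [z [/= -> ]] /= [].
  have uF : \bigcup_i [set i.+1] = [set n | (0 < n)%N].
    apply/seteqP; split => z /=; first by case=> i _ ->.
    by case: z => // z _; exists z.
  have sa := @measure_sigma_additive _ _ _ (N _ nat Q) (fun i => [set i.+1])
    (fun i => I) tF.
  rewrite uF in sa.
  have hterm : forall i, N _ nat Q [set i.+1] = (xiN N (Ms i))%:E.
    by move=> i; rewrite -(QS i) xi_spec.
  have hT : N _ nat Q [set n | (0 < n)%N] = (xiN N S)%:E.
    by rewrite -QT xi_spec.
  have E1 : (fun n => (\sum_(0 <= i < n) N _ nat Q [set i.+1])%E) =
            (fun n => (\sum_(0 <= i < n) xiN N (Ms i))%:E).
    by apply: funext => n; rewrite -sumEFin; apply: eq_bigr => i _; exact: hterm.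
  have sa2 : (fun n => (\sum_(0 <= i < n) xiN N (Ms i))%:E) @ \oo --> (xiN N S)%:E.
    rewrite -hT -E1; exact: sa.
  have := fine_cvg sa2 => /= sa'.
  have -> : (fun n => \sum_(i < n) xiN N (Ms i)) = (fun n => \sum_(0 <= i < n) xiN N (Ms i)).
    by apply: funext => n; rewrite big_mkord.
  exact: sa'.
Qed.
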